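(* Let $g_n(y)=\sum_{[\pi]\in\mathfrak{C}_{n}^o}y^{\operatorname{drop}_{eo}([\pi])}$. Then $g_1=1$ and for every $n\ge1$: (i) $g_{2n}=nyg_{2n-1}-y^2\frac{d}{dy}g_{2n-1}+y\frac{d}{dy}g_{2n-1}$; (ii) $g_{2n+1}=ng_{2n}-y\frac{d}{dy}g_{2n}+\frac{d}{dy}g_{2n}$.
   Context: For $n\ge1$, a cycle on $[n]=\{1,\dots,n\}$ is an equivalence class $[\pi]$ of permutations $\pi=\pi_1\cdots\pi_n$ of $[n]$ (in one-line notation) under cyclic rotation of the entries; the set of cycles on $[n]$ is $\mathfrak{C}_n$. Each cycle is represented by the permutation $\pi$ with $\pi_1=1$, and indices are read modulo $n$. A drop of $[\pi]$ is a consecutive pair $(\pi_i,\pi_{i+1})$, $1\le i\le n$, with $\pi_i>\pi_{i+1}$. By convention, the unique cycle $[(1)]\in\mathfrak{C}_1$ has exactly one drop $(\star,1)$, where $\star$ is considered neither even nor odd. A drop $(a,b)$ is even-odd if $a$ is even and $b$ is odd; $\operatorname{drop}_{eo}([\pi])$ is the number of even-odd drops of $[\pi]$. $\mathfrak{C}_n^o$ is the set of cycles $[\pi]\in\mathfrak{C}_n$ such that for every drop $(\pi_i,\pi_{i+1})$, the entry $\pi_{i+1}$ is odd. *)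

(* Defs.v *)
From HB Require Import structures.
From mathcomp Require Import all_boot all_order all_algebra all_fingroup.
Set Implicit Arguments. Unset Strict Implicit. Unset Printing Implicit Defensive.
Import GRing.Theory.
Local Open Scope ring_scope.

(* A cycle [pi] on [n] is represented by its unique representative with
   pi_1 = 1.  We encode the one-line word pi_1 ... pi_n by s : 'S_n via
   pi_{i+1} = val (s i) + 1 (positions and values shifted to 0-based). *)

Definition pv n (s : 'S_n) (i : 'I_n) : nat := (val (s i)).+1.

Definition rooted n (s : 'S_n) : bool :=
  [forall i : 'I_n, (val i == 0%N) ==> (val (s i) == 0%N)].

Definition is_drop n (s : 'S_n) (i : 'I_n) : bool :=
  (pv s (ordS i) < pv s i)%N.

Definition is_eo_drop n (s : 'S_n) (i : 'I_n) : bool :=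
  [&& is_drop s i, ~~ odd (pv s i) & odd (pv s (ordS i))].

Definition drop_eo n (s : 'S_n) : nat := #|[set i | is_eo_drop s i]|.

Definition in_Co n (s : 'S_n) : bool :=
  [forall i : 'I_n, is_drop s i ==> odd (pv s (ordS i))].

Definition g (n : nat) : {poly int} :=
  \sum_(s : 'S_n | rooted s && in_Co s) 'X^(drop_eo s).

(* Main.v *)
Require Import Defs.
From HB Require Import structures.
From mathcomp Require Import all_boot all_order all_algebra all_fingroup.
From mathcomp Require Import zify ring.
Import GRing.Theory.
Set Implicit Arguments. Unset Strict Implicit. Unset Printing Implicit Defensive.

Definition word n (s : 'S_n) : seq nat := [seq val (s i) | i <- enum 'I_n].
Definition cp (w : seq nat) := zip w (rot 1 w).
Definition eop (p : nat * nat) := [&& p.2 < p.1, odd p.1 & ~~ odd p.2].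
Definition cop (p : nat * nat) := (p.2 < p.1) ==> ~~ odd p.2.
Definition eo w := count eop (cp w).
Definition co w := all cop (cp w).

Lemma nth_rot1 (w : seq nat) i : i < size w -> nth 0 (rot 1 w) i = nth 0 w (i.+1 %% size w).
Proof.
case: w => [//|x t] /=; rewrite rot1_cons nth_rcons ltnS => hi.
rewrite leq_eqVlt in hi; case/orP: hi => [/eqP->|hi].
  by rewrite ltnn eqxx modnn.
by rewrite hi modn_small.
Qed.

Lemma size_cp w : size (cp w) = size w.
Proof. by rewrite /cp size_zip size_rot minnn. Qed.

Lemma nth_cp w i : i < size w -> nth (0,0) (cp w) i = (nth 0 w i, nth 0 w (i.+1 %% size w)).
Proof. by move=> hi; rewrite /cp nth_zip ?size_rot // nth_rot1. Qed.

Lemma size_word n (s : 'S_n) : size (word s) = n.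
Proof. by rewrite size_map size_enum_ord. Qed.

Lemma nth_word n (s : 'S_n) (i : 'I_n) : nth 0 (word s) i = val (s i).
Proof. by rewrite (nth_map i) ?size_enum_ord ?nth_ord_enum. Qed.

Lemma cp_word n (s : 'S_n) : cp (word s) = [seq (val (s i), val (s (ordS i))) | i <- enum 'I_n].
Proof.
apply: (@eq_from_nth _ (0,0)); first by rewrite size_cp size_word size_map size_enum_ord.
move=> i; rewrite size_cp size_word => hi.
have -> : i = val (Ordinal hi) by [].
set o := Ordinal hi.
rewrite nth_cp ?size_word // [RHS](nth_map o) ?size_enum_ord // nth_ord_enum.
by rewrite nth_word -(nth_word s (ordS o)).
Qed.

Lemma eo_word n (s : 'S_n) : drop_eo s = eo (word s).
Proof.
rewrite /drop_eo /eo cp_word count_map cardsE [in RHS]enumT cardE /enum_mem size_filter.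
apply: eq_count => i /=.
by rewrite /is_eo_drop /is_drop /eop /pv unfold_in /= ltnS negbK.
Qed.

Lemma co_word n (s : 'S_n) : in_Co s = co (word s).
Proof.
rewrite /in_Co /co cp_word all_map.
apply/forallP/allP => /= H i.
  move=> _; have := H i; rewrite /is_drop /cop /pv /= ltnS.
  by case: (_ < _).
have := H i (mem_enum _ _); rewrite /is_drop /cop /pv /= ltnS.
by case: (_ < _).
Qed.

Definition W n := [seq word s | s <- [seq s <- enum 'S_n | rooted s]].

Lemma word_inj n : injective (@word n).
Proof. by move=> s1 s2 E; apply/permP => i; apply: val_inj; rewrite -!nth_word E. Qed.

Lemma uniqW n : uniq (W n).
Proof. by rewrite (map_inj_uniq (@word_inj n)) filter_uniq // enum_uniq. Qed.

Lemma memW n w : (w \in W n) = perm_eq w (iota 0 n) && (head 0 w == 0).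
Proof.
apply/idP/idP.
- case/mapP => s; rewrite mem_filter => /andP[rs _] ->.
  apply/andP; split.
    rewrite /word -val_enum_ord (map_comp val s); apply: perm_map.
    apply: uniq_perm; rewrite ?enum_uniq ?(map_inj_uniq (@perm_inj _ s)) ?enum_uniq //.
    move=> x; rewrite mem_enum; apply/mapP; exists ((s^-1)%g x); first by rewrite mem_enum.
    by rewrite permKV.
  case: n s rs => [|n] s rs; first by case: (word s) (size_word s).
  rewrite -nth0 (nth_word s ord0).
  by have := forallP rs ord0; rewrite /=.
case/andP => pw hw.
have sw : size w = n by rewrite (perm_size pw) size_iota.
have lt i : i < n -> nth 0 w i < n.
  move=> hi; have : nth 0 w i \in iota 0 n by rewrite -(perm_mem pw) mem_nth ?sw.
  by rewrite mem_iota.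
have uw : uniq w by rewrite (perm_uniq pw) iota_uniq.
pose f := fun i : 'I_n => Ordinal (lt i (ltn_ord i)).
have finj : injective f.
  move=> i j /(congr1 val) /= /eqP; rewrite nth_uniq ?sw // => /eqP; apply: val_inj.
apply/mapP; exists (perm finj).
  rewrite mem_filter mem_enum andbT; apply/forallP => i; apply/implyP => /eqP i0.
  by rewrite permE /= i0 nth0 (eqP hw).
apply: (@eq_from_nth _ 0); rewrite ?size_word // => i; rewrite sw => hi.
have -> : i = val (Ordinal hi) by [].
by rewrite nth_word permE.
Qed.

Definition ins j (w : seq nat) := take j.+1 w ++ size w :: drop j.+1 w.

Lemma ins_inv j w : j < size w -> size w \notin w ->
  index (size w) (ins j w) = j.+1 /\ take j.+1 (ins j w) ++ drop j.+2 (ins j w) = w.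
Proof.
move=> hj hn; have st : size (take j.+1 w) = j.+1 by rewrite size_takel.
have nt : size w \notin take j.+1 w by apply: contra hn; apply: mem_take.
split; first by rewrite /ins index_cat (negbTE nt) st /= eqxx addn0.
rewrite /ins take_size_cat // drop_cat st ltnNge leqnSn /= subSnn /= drop0.
exact: cat_take_drop.
Qed.

Lemma W_size m w : w \in W m -> size w = m.
Proof. by rewrite memW => /andP[pw _]; rewrite (perm_size pw) size_iota. Qed.

Lemma W_lt m w x : w \in W m -> x \in w -> x < m.
Proof. by rewrite memW => /andP[pw _]; rewrite (perm_mem pw) mem_iota. Qed.

Lemma iotaSr m : iota 0 m.+1 = rcons (iota 0 m) m.
Proof. by rewrite -addn1 iotaD add0n cats1. Qed.

Lemma split_at (v : seq nat) k : k < size v -> v = take k v ++ nth 0 v k :: drop k.+1 v.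
Proof. by move=> hk; rewrite -drop_nth // cat_take_drop. Qed.

Lemma memA m v : 0 < m ->
  (v \in [seq ins j w | w <- W m, j <- iota 0 m]) = (v \in W m.+1).
Proof.
move=> m0; apply/idP/idP.
- case/allpairsP => [[w j]] /= [wW jI ->].
  have sw := W_size wW.
  move: wW; rewrite !memW => /andP[pw hw]; apply/andP; split.
    rewrite /ins sw -cat1s perm_catCA cat_take_drop cat1s iotaSr perm_sym perm_rcons perm_cons.
    by rewrite perm_sym.
  by case: w sw hw {pw} => [|x t] /= sw hw; [rewrite -sw in m0 | ].
rewrite memW => /andP[pv hv].
have sv : size v = m.+1 by rewrite (perm_size pv) size_iota.
have mv : m \in v by rewrite (perm_mem pv) mem_iota leq0n add0n ltnSn.
set k := index m v.
have kl : k < m.+1 by rewrite -sv index_mem.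
have k0 : k != 0.
  apply/eqP => k0; have := nth_index 0 mv; rewrite -/k k0 nth0 (eqP hv) => m0'.
  by rewrite -m0' in m0.
have ev : v = take k v ++ m :: drop k.+1 v by rewrite {1}(@split_at v k) ?sv // nth_index.
set w := take k v ++ drop k.+1 v.
have sw : size w = m by rewrite size_cat size_take size_drop sv kl; lia.
have stk : size (take k v) = k by rewrite size_take sv kl.
apply/allpairsP; exists (w, k.-1) => /=; split.
- rewrite memW; apply/andP; split.
    have : perm_eq (m :: w) (m :: iota 0 m).
      rewrite -cat1s perm_catCA /= -ev perm_sym -perm_rcons -iotaSr perm_sym //.
    by rewrite perm_cons.
  by rewrite -nth0 nth_cat stk lt0n k0 nth_take ?lt0n // nth0.
- by rewrite mem_iota /=; lia.
- rewrite /ins sw prednK ?lt0n // /w take_size_cat // drop_size_cat //.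
Qed.

Lemma uniqA m : uniq [seq ins j w | w <- W m, j <- iota 0 m].
Proof.
apply: allpairs_uniq; [exact: uniqW | exact: iota_uniq |].
move=> [w1 j1] [w2 j2] /allpairsP[[a b] /= [aW bI [-> ->]]].
move=> /allpairsP[[c d] /= [cW dI [-> ->]]] /= e.
have sa := W_size aW; have sc := W_size cW.
have na : size a \notin a by apply/negP => /(W_lt aW); rewrite sa ltnn.
have nc : size c \notin c by apply/negP => /(W_lt cW); rewrite sc ltnn.
move: bI dI; rewrite !mem_iota /= => bI dI.
have [ia ea] := ins_inv (j:=b) (w:=a) (ltac:(rewrite sa; lia)) na.
have [ic ec] := ins_inv (j:=d) (w:=c) (ltac:(rewrite sc; lia)) nc.
have [bd] : b.+1 = d.+1 by rewrite -ia -ic e sa sc.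
subst d; congr (_, _); by rewrite -ea -ec e.
Qed.

Lemma modS i n : i < n -> i.+1 %% n = if i.+1 == n then 0 else i.+1.
Proof. by move=> hi; case: eqVneq => [->|ne]; [rewrite modnn | rewrite modn_small // ltn_neqAle ne]. Qed.

Lemma nth_ins j w i : j < size w ->
  nth 0 (ins j w) i = if i <= j then nth 0 w i else if i == j.+1 then size w else nth 0 w i.-1.
Proof.
move=> hj; rewrite /ins nth_cat size_takel // ltnS.
case: leqP => hij; first by rewrite nth_take // ltnS.
case: eqVneq => [->|ne]; first by rewrite subnn.
have -> : i - j.+1 = (i - j.+2).+1 by lia.
rewrite /= nth_drop; congr nth; lia.
Qed.

Lemma size_ins j w : j < size w -> size (ins j w) = (size w).+1.
Proof. by move=> hj; rewrite /ins size_cat size_takel // /= size_drop; lia. Qed.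

Ltac decide_ifs :=
  repeat match goal with |- context[if ?b then _ else _] =>
    let E := fresh in
    first [ have E : b = true by lia | have E : b = false by lia ]; rewrite E; clear E
  end.

Lemma cp_ins j w : j < size w ->
  cp (ins j w) = take j (cp w) ++ (nth 0 w j, size w)
                 :: (size w, nth 0 w (j.+1 %% size w)) :: drop j.+1 (cp w).
Proof.
move=> hj; have sv := size_ins hj.
apply: (@eq_from_nth _ (0,0)).
  by rewrite size_cp sv size_cat size_takel ?size_cp 1?ltnW //= size_drop size_cp; lia.
move=> i; rewrite size_cp sv => hi.
rewrite nth_cp sv // (modS hi) nth_cat size_takel; last by rewrite size_cp ltnW.
have [him|him] := eqVneq i (size w).
  subst i; rewrite !nth_ins //; decide_ifs.
  have [e|ne] := eqVneq (size w) j.+1.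
    by rewrite e subSnn /= modnn.
  have -> : size w - j = (size w - j.+2).+2 by lia.
  rewrite /= nth_drop nth_cp; last by lia.
  rewrite modS; last by lia.
  decide_ifs; congr (nth _ _ _, _); lia.
rewrite !nth_ins //; decide_ifs.
have [hij|hij|->] := ltngtP i j.
- decide_ifs; rewrite nth_take // nth_cp; last by lia.
  by rewrite modS; [decide_ifs | lia].
- have [e|ne] := eqVneq i j.+1.
    subst i; rewrite subSnn /=; decide_ifs; rewrite modS //; decide_ifs.
    by [].
  have -> : i - j = (i - j.+2).+2 by lia.
  decide_ifs; rewrite /= nth_drop nth_cp; last by lia.
  rewrite modS; last by lia.
  decide_ifs; congr (nth _ _ _, nth _ _ _); lia.
- decide_ifs; by rewrite ?eqxx subnn.
Qed.

Lemma W_pair m w j : w \in W m -> j < m ->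
  [/\ nth 0 w j < m, nth 0 w (j.+1 %% m) < m &
      cp w = take j (cp w) ++ (nth 0 w j, nth 0 w (j.+1 %% m)) :: drop j.+1 (cp w)].
Proof.
move=> wW hj; have sw := W_size wW.
split; first by apply: (W_lt wW); apply: mem_nth; rewrite sw.
  by apply: (W_lt wW); apply: mem_nth; rewrite sw ltn_pmod //; case: m hj {sw wW}.
by rewrite -sw -nth_cp ?sw // -drop_nth ?size_cp ?sw // cat_take_drop.
Qed.

Lemma local_co m w j : w \in W m -> j < m ->
  co (ins j w) = co w && ~~ odd (nth 0 w (j.+1 %% m)).
Proof.
move=> wW hj; have sw := W_size wW.
have [a1 a2 ej] := W_pair wW hj.
rewrite /co cp_ins ?sw // {3}ej !all_cat /= /cop /= ltnNge (ltnW a1) a2 /=.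
by case: (all _ _); case: (odd _); case: (all _ _); rewrite /= ?implybT ?andbT ?andbF.
Qed.

Lemma local_eo m w j : w \in W m -> j < m ->
  eo (ins j w) + eop (nth 0 w j, nth 0 w (j.+1 %% m)) =
  eo w + (odd m && ~~ odd (nth 0 w (j.+1 %% m))).
Proof.
move=> wW hj; have sw := W_size wW.
have [a1 a2 ej] := W_pair wW hj.
rewrite /eo cp_ins ?sw // {3}ej !count_cat /=.
have -> : eop (nth 0 w j, m) = false by rewrite /eop /= ltnNge (ltnW a1).
have -> : eop (m, nth 0 w (j.+1 %% m)) = odd m && ~~ odd (nth 0 w (j.+1 %% m)).
  by rewrite /eop /= a2.
set A := count _ _; set B := count _ _; set c := eop _; set d := (_ && _).
rewrite add0n; lia.
Qed.

Lemma cnt_even m : count (fun i => ~~ odd i) (iota 0 m) = uphalf m.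
Proof.
elim: m => [//|m IH]; rewrite iotaSr -cats1 count_cat IH /= addn0 !uphalf_half /=.
by case: (odd m) => /=; lia.
Qed.

Lemma cnt_cp m w : w \in W m -> count (fun p : nat * nat => ~~ odd p.2) (cp w) = uphalf m.
Proof.
move=> wW; have -> : count (fun p : nat * nat => ~~ odd p.2) (cp w) =
  count (fun i => ~~ odd i) (unzip2 (cp w)) by rewrite count_map.
rewrite /cp unzip2_zip ?size_rot //.
rewrite -cnt_even; have /seq.permP -> // : perm_eq (rot 1 w) (iota 0 m).
by rewrite perm_rot; move: wW; rewrite memW => /andP[].
Qed.

Local Open Scope ring_scope.

Lemma g_words n : g n = \sum_(w <- W n | co w) 'X^(eo w).
Proof.
rewrite /g /W big_map big_filter_cond big_enum_cond /=.
by apply: eq_big => s; rewrite ?eo_word // co_word.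
Qed.

Lemma count_split (T : Type) (a b : pred T) s :
  (count (fun x => a x && b x) s + count (fun x => a x && ~~ b x) s = count a s)%N.
Proof. elim: s => //= x s IH; case: (a x); case: (b x) => /=; lia. Qed.

Lemma eo_split w : eo w = count (fun q : nat * nat => ~~ odd q.2 && eop q) (cp w).
Proof. by apply: eq_count => -[a b]; rewrite /eop /=; case: (odd b); rewrite ?andbF ?andbT. Qed.

Lemma eo_le m w : w \in W m -> (eo w <= uphalf m)%N.
Proof.
move=> wW; rewrite -(cnt_cp wW) -(count_split (fun q : nat * nat => ~~ odd q.2) eop) eo_split.
exact: leq_addr.
Qed.

Lemma inner m w : (0 < m)%N -> w \in W m ->
  \sum_(j <- iota 0 m) (if co (ins j w) then 'X^(eo (ins j w)) else 0 : {poly int}) =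
  if co w then (eo w)%:R * 'X^((eo w + odd m).-1) + (uphalf m - eo w)%:R * 'X^(eo w + odd m)
  else 0.
Proof.
move=> m0 wW; have sw := W_size wW.
set K := (eo w + odd m)%N.
have step : \sum_(j <- iota 0 m) (if co (ins j w) then 'X^(eo (ins j w)) else 0 : {poly int}) =
   \sum_(j <- iota 0 m) (if co w && ~~ odd (nth 0%N w (j.+1 %% m))
        then 'X^(K - eop (nth 0%N w j, nth 0%N w (j.+1 %% m))) else 0).
  apply: eq_big_seq => j; rewrite mem_iota /= => hj.
  rewrite (local_co wW hj).
  case: ifP => // /andP[_ ox]; congr ('X^_).
  have := local_eo wW hj; rewrite ox andbT /K; lia.
rewrite step; case: (co w) => /=; last by rewrite big1.
rewrite -big_mkcond.
have -> : \sum_(j <- iota 0 m | ~~ odd (nth 0%N w (j.+1 %% m)))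
            'X^(K - eop (nth 0%N w j, nth 0%N w (j.+1 %% m))) =
          \sum_(q <- cp w | ~~ odd q.2) 'X^(K - eop q) :> {poly int}.
  rewrite [RHS](big_nth (0%N,0%N)) size_cp sw /index_iota subn0.
  rewrite big_seq_cond [RHS]big_seq_cond.
  apply: eq_big => j; last by rewrite mem_iota /= => /andP[hj _]; rewrite nth_cp sw.
  case hj: (j \in iota 0 m) => //=; move: hj; rewrite mem_iota /= => hj.
  by rewrite nth_cp sw.
rewrite (bigID eop) /=.
rewrite (eq_bigr (fun _ => 'X^(K.-1))); last by move=> q /andP[_ ->]; rewrite subn1.
rewrite [X in _ + X = _](eq_bigr (fun _ => 'X^K)); last by move=> q /andP[_ /negbTE ->]; rewrite subn0.
rewrite !big_const_seq !iter_addr_0 !mulr_natl -eo_split.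
congr (_ *+ _ + _ *+ _).
rewrite -(cnt_cp wW) -(count_split (fun q : nat * nat => ~~ odd q.2) eop) eo_split.
by rewrite addKn.
Qed.

Lemma g_step m : (0 < m)%N ->
  g m.+1 = \sum_(w <- W m | co w)
     ((eo w)%:R * 'X^((eo w + odd m).-1) + (uphalf m - eo w)%:R * 'X^(eo w + odd m)).
Proof.
move=> m0; rewrite g_words.
have pA : perm_eq (W m.+1) [seq ins j w | w <- W m, j <- iota 0 m].
  by rewrite perm_sym uniq_perm ?uniqA ?uniqW // => v; rewrite memA.
rewrite (perm_big _ pA) big_mkcond big_allpairs_dep /= [RHS]big_mkcond.
apply: eq_big_seq => w wW.
by rewrite (inner m0 wW).
Qed.

Lemma lin_sum (r : seq (seq nat)) (P : pred (seq nat)) (f : seq nat -> {poly int}) (a b : {poly int}) :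
  a * (\sum_(x <- r | P x) f x) + b * (\sum_(x <- r | P x) f x)^`() =
  \sum_(x <- r | P x) (a * f x + b * (f x)^`()).
Proof.
elim: r => [|x r IH]; first by rewrite !big_nil deriv0 !mulr0 addr0.
rewrite !big_cons; case: (P x) => //; rewrite derivD -IH; ring.
Qed.

Lemma g1 : g 1 = 1.
Proof.
rewrite g_words.
have pW : perm_eq (W 1) [:: [:: 0%N]].
  apply: uniq_perm; rewrite ?uniqW // => v; rewrite memW inE.
  apply/idP/idP => [/andP[pv hv]|/eqP->//].
  have := perm_size pv; case: v pv hv => [|x [|y t]] //= pv /eqP -> _ //.
by rewrite (perm_big _ pW) big_cons big_nil /= expr0 addr0.
Qed.

Lemma term1 (n k : nat) : (k <= n)%N ->
  k%:R * 'X^((k + 1).-1) + (n - k)%:R * 'X^(k + 1) =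
  n%:R * 'X * 'X^k + ('X - 'X^2) * ('X^k)^`() :> {poly int}.
Proof.
move=> kn; rewrite derivXn natrB // addn1 /=.
case: k kn => [|k] kn /=; first by rewrite mulr0n !expr0; ring.
rewrite -mulr_natl !exprS; ring.
Qed.

Lemma term0 (n k : nat) : (k <= n)%N ->
  k%:R * 'X^((k + 0).-1) + (n - k)%:R * 'X^(k + 0) =
  n%:R * 'X^k + (1 - 'X) * ('X^k)^`() :> {poly int}.
Proof.
move=> kn; rewrite derivXn natrB // addn0.
case: k kn => [|k] kn /=; first by rewrite mulr0n !expr0; ring.
rewrite -mulr_natl /= !exprS; ring.
Qed.

Theorem lemma4p1 :
  g 1 = 1 /\
  (forall n : nat, (0 < n)%N ->
     g (2 * n) = n%:R * 'X * g (2 * n - 1) - 'X ^+ 2 * (g (2 * n - 1))^`()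
                 + 'X * (g (2 * n - 1))^`()) /\
  (forall n : nat, (0 < n)%N ->
     g (2 * n + 1) = n%:R * g (2 * n) - 'X * (g (2 * n))^`() + (g (2 * n))^`()).
Proof.
split; first exact: g1.
split => n n0.
- have e : (2 * n = (2 * n - 1).+1)%N by lia.
  have om : odd (2 * n - 1).
    by rewrite (_ : (2 * n - 1 = (n.-1).*2.+1)%N) /= ?odd_double //; lia.
  have um : uphalf (2 * n - 1) = n.
    by rewrite (_ : (2 * n - 1 = (n.-1).*2.+1)%N) /= ?doubleK; lia.
  rewrite {1}e g_step; last by lia.
  rewrite om um.
  have -> : forall G : {poly int}, n%:R * 'X * G - 'X ^+ 2 * G^`() + 'X * G^`() =
              (n%:R * 'X) * G + ('X - 'X^2) * G^`() by move=> G; ring.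
  rewrite g_words lin_sum big_seq_cond [RHS]big_seq_cond.
  apply: eq_bigr => w /andP[wW _]; apply: term1.
  by rewrite -um; apply: eo_le wW.
- have om : odd (2 * n) = false by rewrite mul2n odd_double.
  have um : uphalf (2 * n) = n by rewrite mul2n uphalf_double.
  rewrite addn1 g_step; last by lia.
  rewrite om um.
  have -> : forall G : {poly int}, n%:R * G - 'X * G^`() + G^`() =
              n%:R * G + (1 - 'X) * G^`() by move=> G; ring.
  rewrite g_words lin_sum big_seq_cond [RHS]big_seq_cond.
  apply: eq_bigr => w /andP[wW _]; apply: term0.
  by rewrite -um; apply: eo_le wW.
Qed.
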